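(* Let $G$ be a graph, $q\in\mathcal Q(G)$, $F$ a graph and $\varphi\in\mathsf{Hom}(F,G)$. For each $n\ge1$ let $T_n$ be the graph whose vertices are the pairs $(x,i)$ with $x\in V_G$ and $i$ a function from $\{A\subseteq V_G: x\in A\}$ to $\{0,1,2,\dots\}$ satisfying $i(A)<n^{q(A)}$ for all such $A$, with an edge from $(x,i)$ to $(y,j)$ iff $(x,y)\in E_G$ and $i(A)=j(A)$ for all $A$ with $\{x,y\}\subseteq A\subseteq V_G$. Let $\pi_n:T_n\to G$ be $\pi_n(x,i)=x$ and let $\hom_\varphi(F,T_n)$ be the number of homomorphisms $\psi:F\to T_n$ with $\pi_n\circ\psi=\varphi$. Then \[ \lim_{n\to\infty}\log_n\hom_\varphi(F,T_n)=\sum_{A\subseteq V_G} q(A)\cdot\mathsf{CC}\big(F|_{\varphi^{-1}(A)}\big). \]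
   Context: Graphs are finite directed graphs $G=(V_G,E_G)$ with $V_G$ nonempty finite and $E_G\subseteq V_G\times V_G$. Homomorphisms are vertex maps sending edges to edges; $\mathsf{Hom}(F,G)$ is their set. $F|_B$ is the induced subgraph on $B$ and $\mathsf{CC}$ the number of connected components ignoring edge directions, with $\mathsf{CC}(F|_\emptyset)=0$. $\mathcal Q(G)$ is the set of functions $q:\wp(V_G)\to\mathbb R$ with $q(\emptyset)=0$, $q(A)\ge0$ for all $A$, and $\sum_{A\subseteq V_G}q(A)\,\mathsf{CC}(G|_A)=1$. *)

(* Defs.v *)
From mathcomp Require Import all_boot.
From Stdlib Require Import Reals.
Set Implicit Arguments. Unset Strict Implicit. Unset Printing Implicit Defensive.

Definition is_hom (VF VG : finType) (EF : rel VF) (EG : rel VG) (f : VF -> VG) : Prop :=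
  forall u v, EF u v -> EG (f u) (f v).

Definition usym (V : finType) (E : rel V) (B : {set V}) : rel V :=
  fun x y => [&& x \in B, y \in B & E x y || E y x].

Definition CC (V : finType) (E : rel V) (B : {set V}) : nat :=
  n_comp (usym E B) B.

Notation "\rsum_ ( i : T ) F" := (\big[Rplus/0%R]_(i : T) F)
  (at level 41, F at level 41, i, T at level 50) : R_scope.

Definition in_Q (VG : finType) (EG : rel VG) (q : {set VG} -> R) : Prop :=
  q set0 = 0%R /\ (forall A, (0 <= q A)%R) /\
  (\rsum_(A : {set VG}) (q A * INR (CC EG A)))%R = 1%R.

Definition Rltb (a b : R) : bool := if Rlt_dec a b then true else false.

Section Tn.
Variables (VG : finType) (EG : rel VG) (q : {set VG} -> R).

Definition npow (n : nat) (A : {set VG}) : R := Rpower (INR n) (q A).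

(* A uniform natural bound: every admissible label i(A) < n^{q(A)} is < Mb n.+1. *)
Definition Mb (n : nat) : nat := \max_(A : {set VG}) Z.to_nat (up (npow n A)).

(* A label function i : {A | x \in A} -> nat is represented as a total function on
   {set VG} (with values in a sufficiently large 'I_k) normalized to 0 off the domain
   {A | x \in A}. *)
Definition Tlab (n : nat) := {ffun {set VG} -> 'I_(Mb n).+1}.

Definition Tvalid (n : nat) (p : VG * Tlab n) : bool :=
  [forall A : {set VG},
     if p.1 \in A then Rltb (INR (p.2 A)) (npow n A) else (p.2 A == 0 :> nat)].

Definition TV (n : nat) : finType := { p : VG * Tlab n | @Tvalid n p }.

Definition piT (n : nat) (a : TV n) : VG := (val a).1.

Definition ET (n : nat) : rel (TV n) := fun a b =>
  EG (val a).1 (val b).1 &&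
  [forall A : {set VG}, ((val a).1 \in A) && ((val b).1 \in A) ==>
      ((val a).2 A == (val b).2 A :> nat)].

Definition hom_phi (VF : finType) (EF : rel VF) (phi : VF -> VG) (n : nat) : nat :=
  #|[set psi : {ffun VF -> TV n} |
      [forall u, forall v, EF u v ==> ET (psi u) (psi v)] &&
      [forall u, piT (psi u) == phi u]]|.
End Tn.

(* Main.v *)
Require Import Defs.
From mathcomp Require Import all_boot.
From Stdlib Require Import Reals Lra Lia.
From Stdlib Require ZArith.
Set Implicit Arguments. Unset Strict Implicit. Unset Printing Implicit Defensive.

Section Comb.
Variables (VG : finType) (EG : rel VG) (q : {set VG} -> R)
  (VF : finType) (EF : rel VF) (phi : VF -> VG) (hphi : is_hom EF EG phi) (n : nat).

Definition BB (A : {set VG}) : {set VF} := [set u | phi u \in A].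
Definition eA A := usym EF (BB A).
Definition rt A u := root (eA A) u.
Definition isR A u := (u \in BB A) && (rt A u == u).
Definition cA A := #|[pred k : 'I_(Mb q n).+1 | Rltb (INR k) (npow q n A)]|.

Lemma eA_sym A : connect_sym (eA A).
Proof.
apply: sym_connect_sym => x y; rewrite /eA /usym.
by rewrite andbCA (orbC (EF x y)).
Qed.

Lemma connect_in A u v : connect (eA A) u v -> u \in BB A -> v \in BB A.
Proof.
move=> /connectP [p Hp ->]; elim: p u Hp => //= a p IH u /andP [Hua Hp] Hu.
apply: IH => //; by case/and3P: Hua.
Qed.

Lemma isR_rt A u : u \in BB A -> isR A (rt A u).
Proof.
move=> Hu; rewrite /isR /rt root_root ?eqxx ?andbT; last exact: eA_sym.
exact: connect_in (connect_root _ u) Hu.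
Qed.

Definition Lab := 'I_(Mb q n).+1.
Definition Hset := [set psi : {ffun VF -> TV q n} |
      [forall u, forall v, EF u v ==> ET EG (psi u) (psi v)] &&
      [forall u, piT (psi u) == phi u]].
Definition Gpred (p : {set VG} * VF) : pred Lab :=
  if isR p.1 p.2 then [pred k : Lab | Rltb (INR k) (npow q n p.1)] else pred1 ord0.
Definition Gset := [set g : {ffun {set VG} * VF -> Lab} | [forall p, g p \in Gpred p]].

Definition f1 (psi : {ffun VF -> TV q n}) : {ffun {set VG} * VF -> Lab} :=
  [ffun p => if isR p.1 p.2 then (val (psi p.2)).2 p.1 else ord0].

Lemma Hset_conn psi (A : {set VG}) u v : psi \in Hset -> connect (eA A) u v ->
  (val (psi u)).2 A = (val (psi v)).2 A.
Proof.
rewrite inE => /andP [/forallP He /forallP Hp] /connectP [p Hpa ->].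
elim: p u Hpa => //= a p IH u /andP [Hua Hpa]; rewrite -IH //.
case/and3P: Hua; rewrite /BB !inE => Hu Ha Hor.
have key : forall x y, phi x \in A -> phi y \in A -> EF x y ->
   (val (psi x)).2 A = (val (psi y)).2 A.
  move=> x y Hx Hy Exy; move: (He x) => /forallP /(_ y) /implyP /(_ Exy) /andP [_].
  move=> /forallP /(_ A) /implyP; move: (Hp x) (Hp y); rewrite /piT => /eqP -> /eqP ->.
  by rewrite Hx Hy => /(_ isT) /eqP H; apply: val_inj.
by case/orP: Hor => H; [apply: key | apply/esym; apply: key].
Qed.

Lemma Hset_phi psi u : psi \in Hset -> (val (psi u)).1 = phi u.
Proof. by rewrite inE => /andP [_ /forallP /(_ u) /eqP]. Qed.

Lemma Hset_lab psi u (A : {set VG}) : psi \in Hset -> phi u \notin A -> (val (psi u)).2 A = ord0.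
Proof.
move=> H Hn; have := valP (psi u); rewrite /Tvalid => /forallP /(_ A).
by rewrite (Hset_phi u H) (negbTE Hn) => /eqP Hz; apply: val_inj.
Qed.

Lemma f1_inj : {in Hset &, injective f1}.
Proof.
move=> psi1 psi2 H1 H2 Heq; apply/ffunP => u; apply: val_inj.
apply: injective_projections; first by rewrite !Hset_phi.
apply/ffunP => A.
case: (boolP (phi u \in A)) => HA; last by rewrite !Hset_lab.
have Hu : u \in BB A by rewrite inE.
have Hc : connect (eA A) u (rt A u) by apply: connect_root.
rewrite (Hset_conn H1 Hc) (Hset_conn H2 Hc).
have := congr1 (fun g : {ffun {set VG} * VF -> Lab} => g (A, rt A u)) Heq; rewrite !ffunE /= isR_rt //; by move=> /(congr1 val).
Qed.
Lemma f1_in psi : psi \in Hset -> f1 psi \in Gset.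
Proof.
move=> H; rewrite inE; apply/forallP => [[A u]]; rewrite ffunE /Gpred /=.
case: ifP => // /andP [Hu _]; rewrite inE /=.
have := valP (psi u); rewrite /Tvalid => /forallP /(_ A).
have HA : phi u \in A by move: Hu; rewrite inE.
by rewrite (Hset_phi u H) HA.
Qed.

Definition lab (g : {ffun {set VG} * VF -> Lab}) (u : VF) : Tlab q n :=
  [ffun A : {set VG} => if phi u \in A then g (A, rt A u) else ord0].

Lemma lab_valid g u : g \in Gset -> Tvalid (phi u, lab g u).
Proof.
rewrite inE => /forallP Hg; rewrite /Tvalid; apply/forallP => A /=; rewrite ffunE.
case: ifP => HA; rewrite HA //; have Hu : u \in BB A by rewrite inE.
by move: (Hg (A, rt A u)); rewrite /Gpred /= isR_rt // inE.
Qed.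

Lemma Gset_sub : Gset \subset f1 @: Hset.
Proof.
apply/subsetP => g Hg.
pose psi := [ffun u => (Sub (phi u, lab g u) (lab_valid u Hg) : TV q n)].
apply/imsetP; exists psi.
  rewrite inE; apply/andP; split; last by apply/forallP => u; rewrite ffunE.
  apply/forallP => u; apply/forallP => v; apply/implyP => Euv.
  rewrite !ffunE /ET /=; rewrite hphi //=; apply/forallP => A; apply/implyP => /andP [Hu Hv].
  rewrite !ffunE Hu Hv.
  have -> : rt A u = rt A v.
    apply/eqP; rewrite /rt root_connect; last exact: eA_sym.
    by apply: connect1; rewrite /eA /usym !inE Hu Hv Euv.
  by [].
apply/ffunP => [[A u]]; rewrite !ffunE /=.
move: (Hg); rewrite inE => /forallP /(_ (A, u)); rewrite /Gpred /=.
case: ifP => [/andP [Hu /eqP Hr] _ | _ /eqP -> //].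
move: Hu; rewrite inE => ->; by rewrite Hr.
Qed.

Lemma card_HG : #|Hset| = #|Gset|.
Proof.
rewrite -(card_in_imset f1_inj); apply: eq_card => g; apply/idP/idP => [/imsetP [psi Hpsi ->] | Hg]; first exact: f1_in.
exact: (subsetP Gset_sub).
Qed.

Lemma hom_phiE : hom_phi EG q EF phi n = #|Gset|.
Proof. by rewrite -card_HG. Qed.

Lemma card_G : #|Gset| = (\prod_(A : {set VG}) expn (cA A) (CC EF (BB A)))%N.
Proof.
have -> : #|Gset| = #|(family_mem (fun p => mem (Gpred p)) : simpl_pred {ffun {set VG} * VF -> Lab})|.
  by apply: eq_card => g; rewrite inE; apply/forallP/familyP.
rewrite card_family foldrE big_map big_enum /=.
rewrite -(pair_big xpredT xpredT (fun A u => #|Gpred (A, u)|)) /=.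
apply: eq_bigr => A _.
rewrite (eq_bigr (fun u => if isR A u then cA A else 1%N)); last first.
  by move=> u _; rewrite /Gpred /=; case: ifP => _; rewrite ?card1.
rewrite -big_mkcond /= prod_nat_const.
congr expn; apply: eq_card => u; rewrite /CC /n_comp_mem /isR /= !inE /=.
by rewrite unfold_in /= andbC inE.
Qed.
End Comb.

Lemma up_bound (x : R) (k : nat) : (0 < x)%R -> (INR k < x)%R -> (k < Z.to_nat (up x)).
Proof.
move=> Hx Hk; have [H1 _] := archimed x.
have : (IZR (Z.of_nat k) < IZR (up x))%R by rewrite -INR_IZR_INZ; lra.
move/lt_IZR => H; apply/ltP; lia.
Qed.

Lemma up_INR (x : R) : (0 < x)%R -> (INR (Z.to_nat (up x)) <= x + 1)%R.
Proof.
move=> Hx; have [H1 H2] := archimed x.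
have Hp : (0 <= up x)%Z.
  have : (IZR 0 < IZR (up x))%R by rewrite /=; lra.
  move/lt_IZR; lia.
rewrite INR_IZR_INZ Znat.Z2Nat.id //; lra.
Qed.

Section CA.
Variables (VG : finType) (q : {set VG} -> R) (n : nat) (A : {set VG}).
Let x := npow q n A.
Let P := [pred k : 'I_(Mb q n).+1 | Rltb (INR k) x].

Lemma x_pos : (0 < x)%R.
Proof. rewrite /x /npow /Rpower; apply: exp_pos. Qed.

Lemma RltbP a b : reflect (a < b)%R (Rltb a b).
Proof. rewrite /Rltb; case: Rlt_dec => H; constructor => //. Qed.

Lemma zM : (Z.to_nat (up x) <= Mb q n).
Proof. rewrite /Mb /x. exact: (@leq_bigmax _ (fun A0 : {set VG} => Z.to_nat (up (npow q n A0))) A). Qed.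

Lemma cA_upper : (INR #|P| <= x + 1)%R.
Proof.
apply: Rle_trans (up_INR x_pos); apply: le_INR; apply/leP.
rewrite cardE -(size_map val) -(size_iota 0 (Z.to_nat (up x))).
apply: uniq_leq_size; first by rewrite map_inj_uniq ?enum_uniq //; apply: val_inj.
move=> y /mapP [k]; rewrite mem_enum inE => /RltbP Hk ->.
by rewrite mem_iota add0n /= (up_bound x_pos Hk).
Qed.

Lemma cA_lower : (x <= INR #|P|)%R.
Proof.
apply: Rnot_lt_le => Hm.
have : (#|P|.+1 <= #|P|).
  rewrite [in X in (_ <= X)]cardE -(size_map val) -(size_iota 0 #|P|.+1).
  apply: uniq_leq_size; first exact: iota_uniq.
  move=> y; rewrite mem_iota add0n /= => Hy.
  have Hyx : (INR y < x)%R.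
    apply: Rle_lt_trans Hm; apply: le_INR; apply/leP; by rewrite -ltnS.
  have HyM : (y < (Mb q n).+1).
    apply: leq_trans (up_bound x_pos Hyx) _; apply: leq_trans zM _; exact: leqnSn.
  apply/mapP; exists (Ordinal HyM) => //; rewrite mem_enum inE /=; exact/RltbP.
by rewrite ltnn.
Qed.
End CA.

Lemma rsum_le (I : finType) (F G : I -> R) :
  (forall i, (F i <= G i)%R) -> (\rsum_(i : I) F i <= \rsum_(i : I) G i)%R.
Proof.
move=> H; apply: (big_ind2 (fun a b => (a <= b)%R)); first exact: Rle_refl.
  by move=> *; apply: Rplus_le_compat.
by move=> i _; apply: H.
Qed.

Lemma rsum_add (I : finType) (F G : I -> R) :
  (\rsum_(i : I) (F i + G i) = \rsum_(i : I) F i + \rsum_(i : I) G i)%R.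
Proof.
apply: (big_rec3 (fun a b c => a = b + c)%R); first by lra.
by move=> i a b c _ ->; lra.
Qed.

Lemma rsum_scal (I : finType) (F : I -> R) c :
  (\rsum_(i : I) (F i * c) = (\rsum_(i : I) F i) * c)%R.
Proof.
apply: (big_rec2 (fun a b => a = b * c)%R); first by lra.
by move=> i a b _ ->; lra.
Qed.

Lemma ln_le' x y : (0 < x)%R -> (x <= y)%R -> (ln x <= ln y)%R.
Proof.
move=> Hx Hxy; case: (Rle_lt_or_eq_dec _ _ Hxy) => H.
  by apply: Rlt_le; apply: ln_increasing.
by rewrite H; apply: Rle_refl.
Qed.

Lemma expn_pow m k : expn m k = Nat.pow m k.
Proof. by elim: k => // k IH; rewrite expnS IH. Qed.

Lemma ln_prod (I : finType) (c k : I -> nat) : (forall i, 0 < c i) ->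
  ln (INR (\prod_(i : I) expn (c i) (k i))) = (\rsum_(i : I) (INR (k i) * ln (INR (c i))))%R.
Proof.
move=> Hc.
suff [_ ->] : 0 < \prod_(i : I) expn (c i) (k i) /\ ln (INR (\prod_(i : I) expn (c i) (k i))) = (\rsum_(i : I) (INR (k i) * ln (INR (c i))))%R by [].
apply: (big_ind2 (fun (h : nat) (s : R) => 0 < h /\ ln (INR h) = s)).
- by split => //; rewrite ln_1.
- move=> h1 s1 h2 s2 [H1 <-] [H2 <-]; split; first by rewrite muln_gt0 H1.
  rewrite -multE mult_INR ln_mult //; apply: lt_0_INR; apply/ltP => //.
- move=> i _; split; first by rewrite expn_gt0 Hc.
  rewrite expn_pow pow_INR ln_pow //; apply: lt_0_INR; apply/ltP; exact: Hc.
Qed.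

Section Bounds.
Variables (VG : finType) (EG : rel VG) (q : {set VG} -> R)
  (VF : finType) (EF : rel VF) (phi : VF -> VG) (hphi : is_hom EF EG phi)
  (hq0 : forall A, (0 <= q A)%R) (m : nat) (hm : 1 < m).

Let L := ln (INR m).
Lemma L_pos : (0 < L)%R.
Proof.
rewrite /L -ln_1; apply: ln_increasing; first lra.
have := lt_INR 1 m; rewrite /= => H; apply: H; exact/ltP.
Qed.

Lemma ln_x A : ln (npow q m A) = (q A * L)%R.
Proof. by rewrite /npow /Rpower ln_exp. Qed.

Lemma x_ge1 A : (1 <= npow q m A)%R.
Proof.
rewrite /npow /Rpower; apply: Rle_trans (exp_ineq1_le _).
have := Rmult_le_pos _ _ (hq0 A) (Rlt_le _ _ L_pos); rewrite /L; lra.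
Qed.

Lemma cA_pos A : 0 < cA q m A.
Proof.
have H := cA_lower q m A; have H1 := x_pos q m A; apply/ltP; apply: INR_lt.
rewrite /=; rewrite /cA; lra.
Qed.

Lemma lnc_lo A : (q A * L <= ln (INR (cA q m A)))%R.
Proof. rewrite -ln_x; apply: ln_le'; [exact: x_pos | exact: cA_lower]. Qed.

Lemma lnc_hi A : (ln (INR (cA q m A)) <= ln 2 + q A * L)%R.
Proof.
rewrite -ln_x -ln_mult; [| lra | exact: x_pos].
apply: ln_le'; first by apply: lt_0_INR; apply/ltP; exact: cA_pos.
have := cA_upper q m A; have := x_ge1 A; rewrite /cA; lra.
Qed.

Definition Sq := (\rsum_(A : {set VG}) (q A * INR (CC EF [set u | phi u \in A])))%R.
Definition Kt := (\rsum_(A : {set VG}) INR (CC EF [set u | phi u \in A]))%R.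

Lemma lnH_bounds :
  (Sq * L <= ln (INR (hom_phi EG q EF phi m)) <= Sq * L + Kt * ln 2)%R.
Proof.
rewrite (hom_phiE q hphi) card_G ln_prod; last exact: cA_pos.
rewrite /Sq /Kt -!rsum_scal; split.
  apply: rsum_le => A; have := lnc_lo A.
  have := pos_INR (CC EF (BB phi A)); rewrite /BB => Hk Hl.
  have := Rmult_le_compat_l _ _ _ Hk Hl; lra.
rewrite -rsum_add; apply: rsum_le => A; have := lnc_hi A.
have := pos_INR (CC EF (BB phi A)); rewrite /BB => Hk Hl.
have := Rmult_le_compat_l _ _ _ Hk Hl; lra.
Qed.
End Bounds.

Theorem lemma6p1
  (VG : finType) (EG : rel VG) (hVG : 0 < #|VG|)
  (q : {set VG} -> R) (hq : in_Q EG q)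
  (VF : finType) (EF : rel VF) (hVF : 0 < #|VF|)
  (phi : VF -> VG) (hphi : is_hom EF EG phi) :
  Un_cv
    (fun n => (ln (INR (hom_phi EG q EF phi n.+2)) / ln (INR n.+2))%R)
    (\rsum_(A : {set VG}) (q A * INR (CC EF [set u | phi u \in A])))%R.
Proof.
move: hq => [_ [hq0 _]] eps Heps.
set S := (\rsum_(A : {set VG}) (q A * INR (CC EF [set u | phi u \in A])))%R.
set C := (Kt EF phi * ln 2)%R.
have [N HN] := INR_unbounded (exp (Rabs C / eps)).
exists N => k Hk.
have Hm : 1 < k.+2 by [].
have [B1 B2] := lnH_bounds hphi hq0 Hm.
have HL := L_pos Hm.
rewrite /Sq -/S -/C in B1 B2.
set L := ln (INR k.+2) in HL B1 B2 *.
set lH := ln (INR (hom_phi EG q EF phi k.+2)) in B1 B2 *.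
have HLC : (Rabs C / eps < L)%R.
  rewrite -(ln_exp (Rabs C / eps)) /L; apply: ln_increasing; first exact: exp_pos.
  apply: Rlt_le_trans HN _; apply: le_INR; lia.
have HC : (C < eps * L)%R.
  have := Rle_abs C; have : (Rabs C < eps * L)%R.
    have -> : Rabs C = (Rabs C / eps * eps)%R by field; lra.
    nra.
  lra.
rewrite /R_dist.
have -> : (lH / L - S = (lH - S * L) / L)%R by field; lra.
set t := ((lH - S * L) / L)%R.
have Ht : (lH - S * L = t * L)%R by rewrite /t; field; lra.
apply: Rabs_def1.
  apply: Rnot_le_lt => H; have := Rmult_le_compat_r L _ _ (Rlt_le _ _ HL) H; lra.
apply: Rnot_le_lt => H.
have : (t <= 0)%R by lra.
move=> H0; have := Rmult_le_compat_r L _ _ (Rlt_le _ _ HL) H0.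
move=> H1; have Hneg : (t * L < 0)%R.
  have := Rmult_lt_compat_r L _ _ HL (Rle_lt_trans _ _ _ H (Ropp_lt_gt_0_contravar _ Heps)) ; lra.
lra.
Qed.
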